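(* Let $d\ge1$, $P\subseteq\mathbb R\times[d]$, $k\in[d]$ and $n$ a positive integer. If $n$ sets $\mathcal D=\{C_1,\dots,C_n\}\subseteq\mathcal C_{\equiv}(P)$ $k$-intersect, then there is a subfamily $\mathcal D'\subseteq\mathcal D$ with $|\mathcal D'|\le 2d-k$ such that $f(\bigcap\mathcal D)=f(\bigcap\mathcal D')$.
   Context: $[d]=\{1,\dots,d\}$. A (separated) $d$-interval is a set $I=\bigcup_{i\in[d]}\{(x,i): x\in I^{(i)}\}\subseteq\mathbb R\times[d]$ with each $I^{(i)}\subseteq\mathbb R$ convex (possibly empty); for any set $C\subseteq\mathbb R\times[d]$ write $C^{(i)}=\{x\in\mathbb R:(x,i)\in C\}$ for its $i$-th level, and points $(x,i)$ lie in the $i$-th level. For $P\subseteq\mathbb R\times[d]$, $\mathcal C_{\equiv}(P)=\{I\cap P: I \text{ a } d\text{-interval}\}$. A collection of sets of $\mathcal C_{\equiv}(P)$ $k$-intersects if its intersection contains at least $k$ points of $P$ lying in $k$ distinct levels. Let $\hat{\mathcal C}_{\equiv}(P)$ be the set of all intersections $\bigcap\mathcal C$ of finite $k$-intersecting subfamilies $\mathcal C\subseteq\mathcal C_{\equiv}(P)$, and define $f:\hat{\mathcal C}_{\equiv}(P)\to(\mathbb R\cup\{-\infty,+\infty\})^d$ by $f(\hat C)=(x_1,\dots,x_d)$ with $x_i=\sup\hat C^{(i)}$ if $\hat C^{(i)}\ne\emptyset$ and $x_i=-\infty$ if $\hat C^{(i)}=\emptyset$. *)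

(* Defs.v *)
From mathcomp Require Import all_boot all_order all_algebra.
From mathcomp Require Import boolp classical_sets reals constructive_ereal ereal.
Set Implicit Arguments. Unset Strict Implicit. Unset Printing Implicit Defensive.
Import Order.TTheory GRing.Theory Num.Theory.
Local Open Scope classical_set_scope.
Local Open Scope ring_scope.

(* Levels [d] = {1..d} are represented by 'I_d = {0..d-1}. *)

Section Defs.
Variables (R : realType) (d : nat).

Definition convexR (A : set R) : Prop :=
  forall x y z, A x -> A z -> x <= y -> y <= z -> A y.

Definition level (C : set (R * 'I_d)) (i : 'I_d) : set R := [set x | C (x, i)].

Definition d_interval (I : set (R * 'I_d)) : Prop :=
  forall i, convexR (level I i).

Definition Cequiv (P : set (R * 'I_d)) : set (set (R * 'I_d)) :=
  [set C | exists I, d_interval I /\ C = I `&` P].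

(* intersection of the subfamily {C_i : i in S}, taken inside P
   (so the empty subfamily has intersection P) *)
Definition famcap (P : set (R * 'I_d)) n (C : 'I_n -> set (R * 'I_d))
  (S : {set 'I_n}) : set (R * 'I_d) :=
  [set p | P p /\ forall i, i \in S -> C i p].

Definition k_points (P : set (R * 'I_d)) (k : nat) (A : set (R * 'I_d)) : Prop :=
  exists (g : 'I_k -> 'I_d) (xs : 'I_k -> R),
    injective g /\ forall j, P (xs j, g j) /\ A (xs j, g j).

Definition k_intersects (P : set (R * 'I_d)) (k : nat) n
  (C : 'I_n -> set (R * 'I_d)) (S : {set 'I_n}) : Prop :=
  k_points P k (famcap P C S).

Definition f_sup (Ch : set (R * 'I_d)) : 'I_d -> \bar R :=
  fun i => if pselect (level Ch i !=set0)
           then ereal_sup [set x%:E | x in level Ch i]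
           else -oo%E.

End Defs.

(* Main.v *)
Require Import Defs.
From mathcomp Require Import all_boot all_order all_algebra.
From mathcomp Require Import boolp classical_sets reals constructive_ereal ereal.
From mathcomp Require Import zify.
Set Implicit Arguments. Unset Strict Implicit. Unset Printing Implicit Defensive.
Import Order.TTheory GRing.Theory Num.Theory.
Local Open Scope classical_set_scope.
Local Open Scope ring_scope.

Lemma card_bigcup_le (T I : finType) (F : I -> {set T}) :
  (#|(\bigcup_i F i)%SET| <= \sum_i #|F i|)%N.
Proof.
elim/big_rec2: _ => [|i n U _ leUn]; first by rewrite cards0.
by rewrite (leq_trans (leq_card_setU _ _).1) ?leq_add2l.
Qed.

Lemma exists_min (R : realType) n (i0 : 'I_n) (F : 'I_n -> R) :
  exists a, forall b, F a <= F b.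
Proof.
case: (@arg_minP _ _ _ i0 predT F isT) => a _ H; exists a => b; exact: H.
Qed.

Lemma exists_max (R : realType) n (i0 : 'I_n) (F : 'I_n -> R) :
  exists a, forall b, F b <= F a.
Proof.
case: (@arg_maxP _ _ _ i0 predT F isT) => a _ H; exists a => b; exact: H.
Qed.

Section Aux.
Variables (R : realType) (d : nat) (P : set (R * 'I_d)).

Lemma Cconv C : Cequiv P C -> forall i x y z, C (x,i) -> C (z,i) -> P (y,i) ->
  x <= y -> y <= z -> C (y,i).
Proof.
move=> [I [HI ->]] i x y z [Ix Px] [Iz Pz] Py xy yz; split => //.
exact: (HI i x y z Ix Iz xy yz).
Qed.

Lemma fsup_eq (A B : set (R * 'I_d)) i :
  (forall x, A (x,i) -> B (x,i)) ->
  (forall x, B (x,i) -> exists2 y, A (y,i) & x <= y) ->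
  f_sup A i = f_sup B i.
Proof.
move=> AB BA; rewrite /f_sup.
case: pselect => [[x Ax]|nA]; case: pselect => [[y By]|nB].
- apply/eqP; rewrite eq_le; apply/andP; split.
  + apply: ereal_sup_le => _ [z Az <-]; exists z => //; exact: AB.
  + apply: ge_ereal_sup => _ [z Bz <-]. have [w Aw zw] := BA z Bz.
    apply: le_ereal_sup_tmp; exists w%:E; first by exists w.
    by rewrite lee_fin.
- exfalso; apply: nB; exists x; exact: AB.
- exfalso; apply: nA; have [w Aw _] := BA y By; by exists w.
- by [].
Qed.

Lemma level_choice n (C : 'I_n -> set (R * 'I_d))
  (HC : forall j, Cequiv P (C j)) (i0 : 'I_n) (i : 'I_d) :
  exists T : {set 'I_n},
    (#|T| <= 2 - `[< level (famcap P C [set: 'I_n]) i !=set0 >])%N /\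
    (forall x, famcap P C T (x,i) -> exists2 y, famcap P C [set: 'I_n] (y,i) & x <= y).
Proof.
case: (pselect (level (famcap P C [set: 'I_n]) i !=set0)) => [[y0 Hy0]|Hne].
- rewrite asboolT; last by exists y0.
  suff [a Ha] : exists a, forall x, famcap P C [set a]%SET (x,i) ->
      exists2 y, famcap P C [set: 'I_n] (y,i) & x <= y.
    by exists [set a]%SET; rewrite cards1.
  apply: contrapT => Hno.
  have H1 : forall a, exists w, famcap P C [set a]%SET (w,i) /\
      (forall y, famcap P C [set: 'I_n] (y,i) -> y < w).
    move=> a; apply: contrapT => Hw; apply: Hno; exists a => x Hx.
    apply: contrapT => Hx2; apply: Hw; exists x; split => // y Hy.
    rewrite ltNge; apply/negP => xy; apply: Hx2; by exists y.
  have [w Hw] := choice H1.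
  have H2 : forall a, exists b, ~ C b (w a, i).
    move=> a; apply: contrapT => Hb.
    have : famcap P C [set: 'I_n] (w a, i).
      split; first exact: (proj1 (proj1 (Hw a))).
      move=> j _; apply: contrapT => ?; apply: Hb; by exists j.
    by move/(Hw a).2; rewrite ltxx.
  have [g Hg] := choice H2.
  have [a Ha] := exists_min i0 w.
  apply: (Hg a).
  apply: (Cconv (HC (g a)) (x:=y0) (z:=w (g a))).
  + by apply: (proj2 Hy0); rewrite inE.
  + exact: (proj2 (proj1 (Hw (g a)))) (g a) (set11 _).
  + exact: (proj1 (proj1 (Hw a))).
  + exact: ltW ((Hw a).2 _ Hy0).
  + exact: Ha (g a).
- rewrite asboolF // subn0.
  suff [a [b Hab]] : exists a b, ~ (level (famcap P C [set a; b]%SET) i !=set0).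
    exists [set a; b]%SET; split.
      by rewrite cards2; case: (a != b).
    move=> x Hx; exfalso; apply: Hab; by exists x.
  apply: contrapT => Hno.
  have H1 : forall a b, exists z, famcap P C [set a; b]%SET (z,i).
    move=> a b; apply: contrapT => Hz; apply: Hno; exists a, b.
    move=> [z Hz']; apply: Hz; by exists z.
  have H1' : forall a, exists f : 'I_n -> R, forall b, famcap P C [set a; b]%SET (f b, i).
    by move=> a; have [f Hf] := choice (H1 a); exists f.
  have [z Hz] := choice H1'.
  have [bm Hbm] := choice (fun a => exists_min i0 (z a : 'I_n -> R)).
  have [am Ham] := exists_max i0 (fun a => z a (bm a)).
  apply: Hne; exists (z am (bm am)); split; first exact: (proj1 (Hz am (bm am))).
  move=> j _.
  apply: (Cconv (HC j) (x := z j (bm j)) (z := z am j)).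
  + exact: (proj2 (Hz j (bm j))) j (set21 _ _).
  + exact: (proj2 (Hz am j)) j (set22 _ _).
  + exact: (proj1 (Hz am (bm am))).
  + exact: Ham j.
  + exact: Hbm am j.
Qed.

End Aux.

Theorem lemma5 (R : realType) (d : nat) (P : set (R * 'I_d)) (k n : nat)
  (C : 'I_n -> set (R * 'I_d)) :
  (1 <= d)%N -> (1 <= k)%N -> (k <= d)%N -> (0 < n)%N ->
  (forall i, Cequiv P (C i)) ->
  k_intersects P k C [set: 'I_n] ->
  exists S : {set 'I_n},
    (#|S| <= 2 * d - k)%N /\
    f_sup (famcap P C [set: 'I_n]) = f_sup (famcap P C S).
Proof.
move=> d1 k1 kd n0 HC [g [xs [ginj Hg]]].
pose i0 : 'I_n := Ordinal n0.
have [T HT] := choice (fun i => level_choice HC i0 i).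
exists (\bigcup_i T i)%SET; split.
- pose b i := `[< level (famcap P C [set: 'I_n]) i !=set0 >].
  apply: (leq_trans (card_bigcup_le T)).
  apply: (@leq_trans (\sum_i (2 - b i))%N); first by apply: leq_sum => i _; exact: (HT i).1.
  have E : (\sum_i (2 - b i) + \sum_i (b i : nat) = 2 * d)%N.
    rewrite -big_split /=.
    rewrite (eq_bigr (fun _ => 2%N)); last by move=> i _; case: (b i).
    by rewrite sum_nat_const card_ord mulnC.
  have K : (k <= \sum_i (b i : nat))%N.
    rewrite (eq_bigr (fun i => if b i then 1 else 0)%N); last by move=> i _; case: (b i).
    rewrite -big_mkcond sum1_card.
    have <- : #|[set g j | j in 'I_k]%SET| = k by rewrite card_imset // card_ord.
    apply: subset_leq_card; apply/fintype.subsetP => _ /finset.imsetP [j _ ->].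
    rewrite inE /b /=; exists (xs j); exact: (proj2 (Hg j)).
  lia.
- apply: funext => i; apply: fsup_eq.
  + move=> x [Px Hx]; split => // j _; exact: Hx.
  + move=> x [Px Hx]; apply: (HT i).2; split => // j Hj; apply: Hx.
    by apply/finset.bigcupP; exists i.
Qed.
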